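(* Let $A$ be an $n\times n$ binary matrix with zero diagonal. Then there is a homeomorphism $Q^n_{\mathcal{F}_A}\cong M(\mathcal{C}^n_0,\lambda_A)$ which is equivariant with respect to the action of $H=\langle h_1,\dots,h_n\rangle\cong(\mathbb{Z}_2)^n$ on $Q^n_{\mathcal{F}_A}$ and the natural $(\mathbb{Z}_2)^n$-action on $M(\mathcal{C}^n_0,\lambda_A)$, under the isomorphism $h_i\mapsto e_i$.
   Context: $\mathcal{C}^n=\{x\in\mathbb{R}^n: -\tfrac14\le x_i\le\tfrac14\}$; $\mathbf{F}(i)$, $\mathbf{F}(-i)$ ($1\le i\le n$) are the facets in $\{x_i=\tfrac14\}$, $\{x_i=-\tfrac14\}$. Binary matrices have entries in $\mathbb{Z}_2$; $A^i_k$ denotes the $(i,k)$ entry; $\widetilde A=A+I_n$. $\mathcal{F}_A$ pairs $\mathbf{F}(j)$ with $\mathbf{F}(-j)$ via $\tau^A_j(x)=y$ with $y_{|j|}=-x_{|j|}$ and $y_k=(-1)^{A^{|j|}_k}x_k$ for $k\ne|j|$; $Q^n_{\mathcal{F}_A}$ is the quotient of $\mathcal{C}^n$ by the equivalence relation generated by $x\sim\tau^A_j(x)$, $x\in\mathbf{F}(j)$. For $1\le i\le n$, $h_i:\mathcal{C}^n\to\mathcal{C}^n$ negates the $i$-th coordinate; these commute with the maps $\tau^A_j$ and hence $H=\langle h_1,\dots,h_n\rangle$ acts on $Q^n_{\mathcal{F}_A}$. $\mathcal{C}^n_0=\{x\in\mathbb{R}^n:0\le x_i\le\tfrac14\}$,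 with facets $\overline F_j=\mathcal{C}^n_0\cap\{x_j=0\}$ and $\overline F^*_j=\mathcal{C}^n_0\cap\{x_j=\tfrac14\}$. Let $e_1,\dots,e_n$ be the standard basis of $(\mathbb{Z}_2)^n$; $\lambda_A(\overline F_j)=e_j$ and $\lambda_A(\overline F^*_j)=\sum_k\widetilde A^j_k e_k$ (the $j$-th row of $\widetilde A$). Glue-back construction: for a nice manifold with corners $W$ and a function $\mu$ from its facets to $(\mathbb{Z}_2)^m$, for a face $f$ let $G_f$ be the subgroup generated by $\mu(F)$ over facets $F\supseteq f$ (and $G_W=0$); for $p\in W$ let $f(p)$ be the face containing $p$ in its relative interior. $M(W,\mu)=W\times(\mathbb{Z}_2)^m/\sim$ where $(p,g)\sim(p',g')$ iff $p=p'$ and $g-g'\in G_{f(p)}$. The natural $(\mathbb{Z}_2)^m$-action is $g\cdot[(p,g_0)]=[(p,g_0+g)]$. *)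

(* Defs.v *)
From Stdlib Require Import Reals Lra.
From Stdlib Require Import Relations.Relation_Operators.
From mathcomp Require Import all_boot.

Set Implicit Arguments.
Unset Strict Implicit.

Local Open Scope R_scope.

Definition pt (n : nat) := 'I_n -> R.

Definition cube_pred (n : nat) (x : pt n) : Prop := forall i, - / 4 <= x i <= / 4.
Definition cube (n : nat) := {x : pt n | cube_pred x}.
Definition cube0_pred (n : nat) (x : pt n) : Prop := forall i, 0 <= x i <= / 4.
Definition cube0 (n : nat) := {x : pt n | cube0_pred x}.

(* subspace topology (of the Euclidean = sup-norm topology on R^n) *)
Definition sub_open (n : nat) (P : pt n -> Prop) (U : {x : pt n | P x} -> Prop) : Prop :=
  forall x, U x -> exists eps, 0 < eps /\
    forall y : {x : pt n | P x},
      (forall i, Rabs (proj1_sig y i - proj1_sig x i) < eps) -> U y.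

Definition quot (T : Type) (E : T -> T -> Prop) := {S : T -> Prop | exists x, S = E x}.
Definition qproj (T : Type) (E : T -> T -> Prop) (x : T) : quot E :=
  exist (fun S => exists y, S = E y) (E x) (ex_intro (fun y => E x = E y) x (@Logic.eq_refl _ (E x))).
Definition quot_open (T : Type) (E : T -> T -> Prop) (openT : (T -> Prop) -> Prop)
  (V : quot E -> Prop) : Prop := openT (fun x => V (qproj E x)).

Definition continuous (X Y : Type) (oX : (X -> Prop) -> Prop) (oY : (Y -> Prop) -> Prop)
  (f : X -> Y) : Prop := forall V, oY V -> oX (fun x => V (f x)).

(* binary n x n matrices: A i k is the (i,k) entry, true = 1 in Z_2 *)
Definition bmx (n : nat) := 'I_n -> 'I_n -> bool.

(* signed facet index j = (|j|, sign): (i,true) is F(i), (i,false) is F(-i) *)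
Definition on_facet (n : nat) (x : pt n) (j : 'I_n * bool) : Prop :=
  x j.1 = (if j.2 then / 4 else - / 4).

Definition tau (n : nat) (A : bmx n) (j : 'I_n * bool) (x : pt n) : pt n :=
  fun k => if k == j.1 then - x k else if A j.1 k then - x k else x k.

Definition Qrel (n : nat) (A : bmx n) (x y : cube n) : Prop :=
  exists j, on_facet (proj1_sig x) j /\ proj1_sig y = tau A j (proj1_sig x).

Definition QE (n : nat) (A : bmx n) : cube n -> cube n -> Prop :=
  clos_refl_sym_trans (cube n) (Qrel A).

Definition QF (n : nat) (A : bmx n) := quot (QE A).
Definition QF_open (n : nat) (A : bmx n) : (QF A -> Prop) -> Prop :=
  quot_open (@sub_open n (@cube_pred n)).

Definition hpt (n : nat) (i : 'I_n) (x : pt n) : pt n :=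
  fun k => if k == i then - x k else x k.

Lemma hpt_cube (n : nat) (i : 'I_n) (x : pt n) : cube_pred x -> cube_pred (hpt i x).
Proof.
  move=> Hx k; rewrite /hpt; case: (k == i); have := Hx k; lra.
Qed.

Definition hmap (n : nat) (i : 'I_n) (x : cube n) : cube n :=
  exist _ (hpt i (proj1_sig x)) (hpt_cube i (proj2_sig x)).

Definition z2v (n : nat) := 'I_n -> bool.
Definition addv (n : nat) (g h : z2v n) : z2v n := fun k => xorb (g k) (h k).
Definition ev (n : nat) (i : 'I_n) : z2v n := fun k => k == i.

(* facets of C^n_0: (j,false) is Fbar_j = {x_j = 0}, (j,true) is Fbar*_j = {x_j = 1/4} *)
Definition cfacet (n : nat) := ('I_n * bool)%type.
Definition on_cfacet (n : nat) (x : pt n) (F : cfacet n) : Prop :=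
  x F.1 = (if F.2 then / 4 else 0).

Definition lambdaA (n : nat) (A : bmx n) (F : cfacet n) : z2v n :=
  if F.2 then (fun k => xorb (A F.1 k) (F.1 == k)) else ev F.1.

(* v lies in G_{f(p)}: the subgroup generated by mu(F), F facets containing f(p)
   (equivalently containing p) *)
Definition inG (n : nat) (mu : cfacet n -> z2v n) (p : pt n) (v : z2v n) : Prop :=
  exists c : cfacet n -> bool,
    (forall F, c F -> on_cfacet p F) /\
    v = (fun k => \big[addb/false]_(F : cfacet n) (c F && mu F k)).

Definition ME (n : nat) (mu : cfacet n -> z2v n) (a b : cube0 n * z2v n) : Prop :=
  a.1 = b.1 /\ inG mu (proj1_sig a.1) (addv a.2 b.2).

(* product topology on C^n_0 x (Z_2)^n, (Z_2)^n discrete *)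
Definition prod_open (n : nat) (U : cube0 n * z2v n -> Prop) : Prop :=
  forall a, U a -> exists eps, 0 < eps /\
    forall q : cube0 n, (forall i, Rabs (proj1_sig q i - proj1_sig a.1 i) < eps) ->
      U (q, a.2).

Definition MW (n : nat) (mu : cfacet n -> z2v n) := quot (ME mu).
Definition MW_open (n : nat) (mu : cfacet n -> z2v n) : (MW mu -> Prop) -> Prop :=
  quot_open (@prod_open n).

(* Main.v *)
Require Import Defs.
From Stdlib Require Import Reals Lra.
From Stdlib Require Import Relations.Relation_Operators.
From Stdlib Require Import Classical ClassicalEpsilon FunctionalExtensionality PropExtensionality.
From mathcomp Require Import all_boot.
Set Warnings "-notation-overridden".
Set Implicit Arguments.
Unset Strict Implicit.
Local Open Scope R_scope.

Lemma sig_eq (A : Type) (P : A -> Prop) (u v : sig P) : proj1_sig u = proj1_sig v -> u = v.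
Proof. destruct u, v; simpl; intros ->; f_equal; apply proof_irrelevance. Qed.

Section Quot.
Variables (T : Type) (E : T -> T -> Prop).
Hypotheses (Hr : forall a, E a a) (Hs : forall a b, E a b -> E b a)
  (Ht : forall a b c, E a b -> E b c -> E a c).

Lemma qproj_eq a b : E a b -> qproj E a = qproj E b.
Proof.
move=> Hab; apply: sig_eq => /=.
apply: functional_extensionality => c; apply: propositional_extensionality; split; eauto.
Qed.

Lemma qproj_inv a b : qproj E a = qproj E b -> E a b.
Proof. move/(f_equal (@proj1_sig _ _)) => /= ->; apply: Hr. Qed.

Definition rep (S : quot E) : T :=
  proj1_sig (constructive_indefinite_description _ (proj2_sig S)).

Lemma rep_spec S : qproj E (rep S) = S.
Proof.
apply: sig_eq => /=; rewrite /rep.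
case: (constructive_indefinite_description _ _) => x Hx /=; by rewrite Hx.
Qed.

Lemma qproj_surj S : exists x, S = qproj E x.
Proof. exists (rep S); by rewrite rep_spec. Qed.

Definition lift (U : Type) (F : T -> U) (S : quot E) : U := F (rep S).

Lemma lift_spec U (F : T -> U) : (forall a b, E a b -> F a = F b) ->
  forall x, lift F (qproj E x) = F x.
Proof.
move=> HF x; apply: HF; apply: qproj_inv; by rewrite rep_spec.
Qed.
End Quot.

Lemma finite_eps (T : eqType) (P : T -> R -> Prop) (s : seq T) :
  (forall t e e', P t e -> 0 < e' <= e -> P t e') ->
  (forall t, t \in s -> exists e, 0 < e /\ P t e) ->
  exists e, 0 < e /\ forall t, t \in s -> P t e.
Proof.
move=> Hm; elim: s => [|a s IH] H.
  exists 1; split; [lra|by []].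
have [ea [ha Pa]] := H a (mem_head a s).
have [es [hs Ps]] : exists e, 0 < e /\ forall t, t \in s -> P t e.
  apply: IH => t ts; apply: H; by rewrite in_cons ts orbT.
exists (Rmin ea es); split; first by apply: Rmin_pos.
move=> t; rewrite in_cons => /orP [/eqP ->|ts].
  apply: Hm Pa _; split; [by apply: Rmin_pos| apply: Rmin_l].
apply: Hm (Ps t ts) _; split; [by apply: Rmin_pos| apply: Rmin_r].
Qed.

Definition sgn (r : R) : bool := if Rlt_dec r 0 then true else false.
Definition isz (r : R) : bool := if Req_dec_T r 0 then true else false.

Lemma sgn_opp r : xorb (sgn r) (sgn (- r)) = ~~ isz r.
Proof. rewrite /sgn /isz; destruct (Rlt_dec r 0); destruct (Rlt_dec (-r) 0); destruct (Req_dec_T r 0) => //=; lra. Qed.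

Lemma xorbE a b : xorb a b = addb a b. Proof. by case: a; case: b. Qed.

Section G.
Variable n : nat.
Implicit Types (p : pt n) (mu : cfacet n -> z2v n).

Lemma inG_ext mu p v w : inG mu p v -> (forall k, v k = w k) -> inG mu p w.
Proof. move=> H E; have -> : w = v by apply: functional_extensionality => k; rewrite E. done. Qed.

Lemma inG0 mu p : inG mu p (fun _ => false).
Proof.
exists (fun _ => false); split => //.
apply: functional_extensionality => k; by rewrite big1.
Qed.

Lemma inG_add mu p v w : inG mu p v -> inG mu p w -> inG mu p (addv v w).
Proof.
move=> [c1 [H1 ->]] [c2 [H2 ->]].
exists (fun F => xorb (c1 F) (c2 F)); split.
  move=> F; case E1: (c1 F); case E2: (c2 F) => //= _; [exact: H1|exact: H2].
apply: functional_extensionality => k; rewrite /addv xorbE -big_split /=.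
by apply: eq_bigr => F _; rewrite xorbE andb_addl.
Qed.

Lemma inG_gen mu p F : on_cfacet p F -> inG mu p (mu F).
Proof.
move=> HF; exists (fun G => G == F); split; first by move=> G /eqP ->.
apply: functional_extensionality => k.
rewrite (bigD1 F) //= eqxx /= big1 ?addbF // => G /negbTE -> //.
Qed.

Lemma inG_zeros (A : bmx n) p (d : 'I_n -> bool) :
  (forall k, d k -> p k = 0) -> inG (lambdaA A) p d.
Proof.
move=> Hd; exists (fun F => ~~ F.2 && d F.1); split.
  move=> [j b] /= /andP [] /negbTE -> /Hd; by rewrite /on_cfacet.
apply: functional_extensionality => k.
rewrite (bigD1 (k, false)) //= /lambdaA /ev /= eqxx andbT big1 ?addbF // => [[j b]] /=.
case: b => //=; case Ej: (k == j); rewrite ?andbF //.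
by move/eqP: Ej => ->; rewrite eqxx.
Qed.
End G.

Section Main.
Variables (n : nat) (A : bmx n).
Hypothesis hA : forall i, A i i = false.

Definition absv (x : pt n) : pt n := fun k => Rabs (x k).
Definition sgnv (x : pt n) : z2v n := fun k => sgn (x k).

Lemma absv_cube0 x : cube_pred x -> cube0_pred (absv x).
Proof. move=> H k; have := H k; rewrite /absv; unfold Rabs; case: Rcase_abs; lra. Qed.

Definition phi (x : cube n) : cube0 n * z2v n :=
  (exist _ (absv (proj1_sig x)) (absv_cube0 (proj2_sig x)), sgnv (proj1_sig x)).

Definition embp (p : pt n) (h : z2v n) : pt n := fun k => if h k then - p k else p k.

Lemma embp_cube p h : cube0_pred p -> cube_pred (embp p h).
Proof. move=> H k; have := H k; rewrite /embp; case: (h k); lra. Qed.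

Definition emb (a : cube0 n * z2v n) : cube n :=
  exist _ (embp (proj1_sig a.1) a.2) (embp_cube a.2 (proj2_sig a.1)).

Notation mu := (lambdaA A).

Lemma ME_refl a : ME mu a a.
Proof. split => //; apply: inG_ext (inG0 _ _) _ => k; by rewrite /addv xorbE addbb. Qed.

Lemma ME_sym a b : ME mu a b -> ME mu b a.
Proof.
move=> [E H]; split => //; rewrite -E; apply: inG_ext H _ => k.
by rewrite /addv !xorbE addbC.
Qed.

Lemma ME_trans a b c : ME mu a b -> ME mu b c -> ME mu a c.
Proof.
move=> [E1 H1] [E2 H2]; split; first by rewrite E1.
rewrite -E1 in H2; apply: inG_ext (inG_add H1 H2) _ => k.
by rewrite /addv !xorbE addbA addbK.
Qed.

Lemma QE_refl x : QE A x x. Proof. exact: rst_refl. Qed.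
Lemma QE_sym x y : QE A x y -> QE A y x. Proof. exact: rst_sym. Qed.
Lemma QE_trans x y z : QE A x y -> QE A y z -> QE A x z. Proof. exact: rst_trans. Qed.

Lemma Qrel_ME x y : Qrel A x y -> ME mu (phi x) (phi y).
Proof.
case: x y => [x cx] [y cy] [[j b] [/= Hf Hy]]; subst y; split; rewrite /phi /=.
  apply: sig_eq => /=; apply: functional_extensionality => k.
  rewrite /absv /tau /=; case: (k == j); rewrite ?Rabs_Ropp //; case: (A j k); by rewrite ?Rabs_Ropp.
set d := fun k => ((k == j) || A j k) && isz (x k).
apply: inG_ext (inG_add (inG_gen mu (F := (j, true)) _) (inG_zeros A (d := d) _)) _.
- rewrite /on_cfacet /absv /=; move: Hf; rewrite /on_facet /=.
  clear cy; case: b => /= ->; unfold Rabs; case: Rcase_abs; lra.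
- move=> k; rewrite /d /absv /isz /=; case: (Req_dec_T (x k) 0) => E; rewrite ?andbF //= => _.
  by rewrite E Rabs_R0.
- move=> k; rewrite /addv /lambdaA /sgnv /tau /d /=.
  case Ek: (k == j).
    move/eqP: Ek => ->; rewrite hA eqxx /= sgn_opp.
    by case: (isz (x j)).
  rewrite eq_sym Ek /=; case: (A j k) => /=.
    by rewrite sgn_opp; case: (isz (x k)).
  by rewrite xorbE addbb.
Qed.

Lemma QE_ME x y : QE A x y -> ME mu (phi x) (phi y).
Proof.
elim => [a b /Qrel_ME //| a | a b _ IH | a b c _ IH1 _ IH2].
- exact: ME_refl.
- exact: ME_sym.
- exact: ME_trans IH1 IH2.
Qed.

Lemma emb_gen (p : cube0 n) h F : on_cfacet (proj1_sig p) F ->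
  QE A (emb (p, h)) (emb (p, fun k => xorb (h k) (mu F k))).
Proof.
case: F => j b; rewrite /on_cfacet /=; case: b => Hp.
- apply: rst_step; exists (j, ~~ h j); split.
    by rewrite /on_facet /= /embp; case: (h j); rewrite Hp.
  apply: functional_extensionality => k; rewrite /tau /lambdaA /= /embp /=.
  case Ek: (k == j).
    move/eqP: Ek => ->; rewrite hA eqxx /=; case: (h j); by rewrite ?Ropp_involutive.
  rewrite eq_sym Ek /=; case: (A j k); case: (h k); by rewrite /= ?Ropp_involutive.
- have -> : emb (p, fun k => xorb (h k) (mu (j, false) k)) = emb (p, h); last exact: rst_refl.
  apply: sig_eq => /=; apply: functional_extensionality => k; rewrite /embp /lambdaA /ev /=.
  case Ek: (k == j); last by case: (h k).
  move/eqP: Ek => ->; rewrite Hp; case: (h j); by rewrite /= ?Ropp_0.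
Qed.

Lemma emb_list (p : cube0 n) (c : cfacet n -> bool) :
  (forall F, c F -> on_cfacet (proj1_sig p) F) ->
  forall (s : seq (cfacet n)) h,
  QE A (emb (p, h)) (emb (p, fun k => xorb (h k) (\big[addb/false]_(F <- s) (c F && mu F k)))).
Proof.
move=> Hc; elim => [|F s IH] h.
  have -> : (fun k => xorb (h k) (\big[addb/false]_(F <- [::]) (c F && mu F k))) = h.
    by apply: functional_extensionality => k; rewrite big_nil; case: (h k).
  exact: rst_refl.
set h1 := fun k => xorb (h k) (c F && mu F k).
have -> : (fun k => xorb (h k) (\big[addb/false]_(G <- F :: s) (c G && mu G k)))
   = (fun k => xorb (h1 k) (\big[addb/false]_(G <- s) (c G && mu G k))).
  apply: functional_extensionality => k; rewrite big_cons /h1 !xorbE; by rewrite addbA.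
apply: rst_trans (IH h1).
case E: (c F).
  rewrite /h1 E; exact: emb_gen (Hc F E).
have -> : h1 = h by apply: functional_extensionality => k; rewrite /h1 E /=; case: (h k).
exact: rst_refl.
Qed.

Lemma ME_QE a b : ME mu a b -> QE A (emb a) (emb b).
Proof.
case: a b => [p h] [p' h'] [/= <- [c [Hc Hv]]].
have -> : emb (p, h') = emb (p, fun k => xorb (h k) (\big[addb/false]_(F <- index_enum _) (c F && mu F k))).
  apply: sig_eq => /=; apply: functional_extensionality => k; rewrite /embp /=.
  have := f_equal (fun f => f k) Hv; rewrite /addv /= => <-.
  by case: (h k); case: (h' k).
exact: emb_list.
Qed.

Definition fmap : QF A -> MW mu := @lift _ (QE A) _ (fun x => qproj (ME mu) (phi x)).
Definition gmap : MW mu -> QF A := @lift _ (ME mu) _ (fun a => qproj (QE A) (emb a)).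

Lemma f_spec x : fmap (qproj (QE A) x) = qproj (ME mu) (phi x).
Proof.
apply: lift_spec; first exact: QE_refl.
move=> a b Hab; apply: qproj_eq; [exact: ME_sym|exact: ME_trans|exact: QE_ME].
Qed.

Lemma g_spec a : gmap (qproj (ME mu) a) = qproj (QE A) (emb a).
Proof.
apply: lift_spec; first exact: ME_refl.
move=> x y Hxy; apply: qproj_eq; [exact: QE_sym|exact: QE_trans|exact: ME_QE].
Qed.


Lemma fg a : gmap (fmap a) = a.
Proof.
have [x ->] := qproj_surj a; rewrite f_spec g_spec; f_equal.
apply: sig_eq => /=; apply: functional_extensionality => k.
rewrite /embp /absv /sgnv /sgn /=; case: (Rlt_dec _ _) => H /=; unfold Rabs; case: Rcase_abs; lra.
Qed.

Lemma gf b : fmap (gmap b) = b.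
Proof.
have [[p h] ->] := qproj_surj b; rewrite g_spec f_spec; apply: (@qproj_eq _ (ME mu) ME_sym ME_trans).
have Hp := proj2_sig p.
split.
  apply: sig_eq => /=; apply: functional_extensionality => k.
  have := Hp k; rewrite /absv /embp /=; case: (h k) => ?; unfold Rabs; case: Rcase_abs; lra.
apply: (@inG_zeros n A) => k; have := Hp k; rewrite /addv /sgnv /sgn /=; rewrite /absv /embp /= /sgnv /sgn.
case: (h k); [case: (Rlt_dec (- sval p k) 0)|case: (Rlt_dec (sval p k) 0)] => /= H1 H2 //= _; unfold Rabs; repeat destruct (Rcase_abs _); lra.
Qed.

Lemma g_cont : continuous (@MW_open n mu) (@QF_open n A) gmap.
Proof.
move=> V HV; rewrite /MW_open /quot_open.
have -> : (fun a => V (gmap (qproj (ME mu) a))) = (fun a => V (qproj (QE A) (emb a))).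
  by apply: functional_extensionality => a; rewrite g_spec.
move=> [p h] Va; have [e [he He]] := HV (emb (p, h)) Va.
exists e; split => // q Hq; apply: He => i /=; rewrite /embp.
case: (h i); last exact: Hq.
have -> : - sval q i - - sval p i = - (sval q i - sval p i) by ring.
by rewrite Rabs_Ropp; apply: Hq.
Qed.

Lemma f_cont : continuous (@QF_open n A) (@MW_open n mu) fmap.
Proof.
move=> V HV; rewrite /QF_open /quot_open.
have -> : (fun x => V (fmap (qproj (QE A) x))) = (fun x => V (qproj (ME mu) (phi x))).
  by apply: functional_extensionality => a; rewrite f_spec.
move=> x Vx.
set U := fun a => V (qproj (ME mu) a).
have [e0 [he0 H0]] : exists e, 0 < e /\ forall g, g \in enum {ffun 'I_n -> bool} ->
   (U ((phi x).1, fun k => g k) -> forall q : cube0 n,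
     (forall i, Rabs (proj1_sig q i - proj1_sig (phi x).1 i) < e) -> U (q, fun k => g k)).
  apply: finite_eps.
    move=> g e e' HP [? ?] HU q Hq; apply: (HP HU q) => i; have := Hq i; lra.
  move=> g _; case: (classic (U ((phi x).1, fun k => g k))) => HU.
    have [e [he He]] := HV _ HU; exists e; split => // _ q Hq; exact: He.
  by exists 1; split; [lra|].
have [e1 [he1 H1]] : exists e, 0 < e /\ forall k, k \in enum 'I_n ->
   (proj1_sig x k <> 0 -> e <= Rabs (proj1_sig x k)).
  apply: finite_eps.
    move=> k e e' HP [? ?] Hk; have := HP Hk; lra.
  move=> k _; case: (Req_dec_T (proj1_sig x k) 0) => Hk.
    by exists 1; split; [lra|].
  exists (Rabs (proj1_sig x k)); split => //; [exact: Rabs_pos_lt|lra].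
exists (Rmin e0 e1); split; first exact: Rmin_pos.
move=> y Hy.
have Ue : U ((phi x).1, sgnv (proj1_sig y)).
  rewrite /U.
  have -> : qproj (ME mu) ((phi x).1, sgnv (proj1_sig y)) = qproj (ME mu) (phi x).
    apply: (@qproj_eq _ (ME mu) ME_sym ME_trans).
    split => //; apply: (@inG_zeros n A) => k /=; rewrite /absv /addv /sgnv /sgn.
    case: (Req_dec_T (proj1_sig x k) 0) => Hk; first by rewrite Hk Rabs_R0.
    have := H1 k (mem_enum _ k) Hk; have := Hy k; have := Rmin_r e0 e1.
    move=> Hm Hyk Hxk; case: (Rlt_dec (sval y k) 0); case: (Rlt_dec (sval x k) 0) => /= ? ? // _.
      exfalso; move: Hyk Hxk Hm; unfold Rabs; repeat destruct (Rcase_abs _); lra.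
    exfalso; move: Hyk Hxk Hm; unfold Rabs; repeat destruct (Rcase_abs _); lra.
  exact: Vx.
have := H0 [ffun k => sgnv (proj1_sig y) k] (mem_enum _ _).
have -> : (fun k => [ffun k0 => sgnv (proj1_sig y) k0] k) = sgnv (proj1_sig y).
  by apply: functional_extensionality => k; rewrite ffunE.
move=> /(_ Ue (phi y).1) HU; apply: HU => i /=; rewrite /absv.
apply: Rle_lt_trans (Rabs_triang_inv2 _ _) _.
apply: Rlt_le_trans (Hy i) _; exact: Rmin_l.
Qed.

Lemma f_equiv (i : 'I_n) (x : cube n) (p : cube0 n) (g0 : z2v n) :
  fmap (qproj (QE A) x) = qproj (ME mu) (p, g0) ->
  fmap (qproj (QE A) (hmap i x)) = qproj (ME mu) (p, addv g0 (ev i)).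
Proof.
rewrite !f_spec => /(qproj_inv (ME_refl)) [/= Ep Hv].
apply: (@qproj_eq _ (ME mu) ME_sym ME_trans).
apply: (ME_trans (b := ((phi x).1, addv (sgnv (proj1_sig x)) (ev i)))).
  split.
    apply: sig_eq => /=; apply: functional_extensionality => k.
    rewrite /absv /hpt; case: (k == i); by rewrite ?Rabs_Ropp.
  apply: (@inG_zeros n A) => k /=; rewrite /absv /hpt /addv /sgnv /ev.
  case: (k == i) => /=; last by case: (sgn _).
  rewrite Rabs_Ropp; have := sgn_opp (proj1_sig x k); rewrite /isz.
  case: (Req_dec_T (sval x k) 0) => [E|_] /=; first by rewrite E Rabs_R0.
  by case: (sgn (sval x k)); case: (sgn (- sval x k)).
split => //=; apply: inG_ext Hv _ => k.
rewrite /addv; by case: (ev i k); case: (g0 k); case: (sgnv (sval x) k).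
Qed.

End Main.

Theorem mainTheorem14 (n : nat) (A : bmx n) (hA : forall i, A i i = false) :
  exists (f : QF A -> MW (lambdaA A)) (g : MW (lambdaA A) -> QF A),
    (forall a, g (f a) = a) /\ (forall b, f (g b) = b) /\
    continuous (@QF_open n A) (@MW_open n (lambdaA A)) f /\
    continuous (@MW_open n (lambdaA A)) (@QF_open n A) g /\
    (forall (i : 'I_n) (x : cube n) (p : cube0 n) (g0 : z2v n),
        f (qproj (QE A) x) = qproj (ME (lambdaA A)) (p, g0) ->
        f (qproj (QE A) (hmap i x)) = qproj (ME (lambdaA A)) (p, addv g0 (ev i))).
Proof.
exists (@fmap n A), (@gmap n A).
split; first exact: (@fg n A hA).
split; first exact: (@gf n A hA).
split; first exact: (@f_cont n A hA).
split; first exact: (@g_cont n A hA).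
exact: (@f_equiv n A hA).
Qed.
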